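(* Let $p$ be an odd prime, $t,s$ positive integers, $r=p^t$, $q=r^s$, $T=q+1$, and let $\chi(x)=\zeta_p^{\mathrm{Tr}_{q^2/p}(x)}$ ($\zeta_p=e^{2\pi i/p}$) be the canonical additive character of $\mathbb{F}_{q^2}$. For $a\in\mathbb{F}_{q^2}^*$ let $$P=\sum_{x\in\mathbb{F}_{q^2},\ \mathrm{Tr}_{q/r}(x^T)=0}\chi(ax).$$ Then $P=-\frac{q}{r}(r-1)$ if $\mathrm{Tr}_{q/r}(a^T)=0$, and $P=\frac{q}{r}$ if $\mathrm{Tr}_{q/r}(a^T)\neq0$.
   Context: $\mathrm{Tr}_{q/r}$ is the trace from $\mathbb{F}_q$ to $\mathbb{F}_r$ and $\mathrm{Tr}_{q^2/p}$ the absolute trace of $\mathbb{F}_{q^2}$; note $x^{q+1}\in\mathbb{F}_q$ for $x\in\mathbb{F}_{q^2}$. *)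

(* Defs.v *)
From HB Require Import structures.
From mathcomp Require Import all_boot all_order all_algebra all_field.
Set Implicit Arguments. Unset Strict Implicit. Unset Printing Implicit Defensive.
Import GRing.Theory Num.Theory.
Local Open Scope ring_scope.

Definition relTr (F : fieldType) (r s : nat) (y : F) : F :=
  \sum_(i < s) y ^+ (r ^ i).

Definition absTr (F : fieldType) (p n : nat) (x : F) : F :=
  \sum_(i < n) x ^+ (p ^ i).

(* Canonical additive character chi(x) = zeta^{Tr(x)}, where the trace
   Tr(x) in the prime field F_p is identified with the unique k in {0..p-1}
   with k%:R = Tr(x). *)
Definition addChar (F : fieldType) (p n : nat) (zeta : algC) (x : F) : algC :=
  oapp (fun k : 'I_p => zeta ^+ k) 0
    [pick k : 'I_p | (k%:R : F) == absTr p n x].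

(* Main.v *)
Require Import Defs.
From HB Require Import structures.
From mathcomp Require Import all_boot all_order all_algebra all_field.
From mathcomp Require Import zify ring.
Import GRing.Theory Num.Theory.
Local Open Scope ring_scope.
Set Warnings "-notation-overridden,-ambiguous-paths".

Section Gen.
Context {F : finFieldType} {p : nat}.
Hypothesis hchar : p \in [pchar F].
Hypothesis hodd : odd p.

Lemma p_gt0 : (0 < p)%N.
Proof. by rewrite prime_gt0 // (pcharf_prime hchar). Qed.

Lemma frobD k (x y : F) : (x + y) ^+ (p ^ k) = x ^+ (p ^ k) + y ^+ (p ^ k).
Proof.
elim: k => [|k IH]; first by rewrite !expn0 !expr1.
by rewrite expnSr !exprM IH -!(pFrobenius_autE hchar) rmorphD.
Qed.

Lemma frob0 k : (0 : F) ^+ (p ^ k) = 0.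
Proof. by rewrite expr0n expn_eq0 (gtn_eqF p_gt0). Qed.

Lemma frob_sum k (I : Type) (rr : seq I) (P : pred I) (f : I -> F) :
  (\sum_(i <- rr | P i) f i) ^+ (p ^ k) = \sum_(i <- rr | P i) (f i) ^+ (p ^ k).
Proof. by apply: (big_morph (fun x => x ^+ (p ^ k)) (frobD k) (frob0 k)). Qed.

Lemma frob_nat k m : (m%:R : F) ^+ (p ^ k) = m%:R.
Proof.
elim: k => [|k IH]; first by rewrite expn0 expr1.
by rewrite expnSr exprM IH -(pFrobenius_autE hchar) pFrobenius_aut_nat.
Qed.

Lemma frobN k (x : F) : (- x) ^+ (p ^ k) = - x ^+ (p ^ k).
Proof.
by rewrite exprNn -signr_odd oddX hodd orbT expr1 mulN1r.
Qed.

Lemma frobV k (x : F) : (x^-1) ^+ (p ^ k) = (x ^+ (p ^ k))^-1.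
Proof. by rewrite exprVn. Qed.

Lemma natr_inj_lt (k k' : nat) : (k < p)%N -> (k' < p)%N -> (k%:R : F) = k'%:R -> k = k'.
Proof.
wlog le : k k' / (k <= k')%N.
  move=> W hk hk' E; case: (leqP k k') => [h|h]; first exact: W.
  by symmetry; apply: W => //; apply: ltnW.
move=> hk hk' E; apply/eqP; rewrite eqn_leq le /=.
have : (p %| k' - k)%N by rewrite (dvdn_pcharf hchar) natrB // E subrr.
case: (posnP (k' - k)) => [/eqP|h /dvdn_leq -/(_ h) hle].
  by rewrite subn_eq0.
by exfalso; move: hle; rewrite leqNgt; move/negP; apply; apply: leq_ltn_trans (leq_subr _ _) hk'.
Qed.

Lemma natr_mod (k : nat) : ((k %% p)%:R : F) = k%:R.
Proof. by rewrite {2}(divn_eq k p) natrD natrM (pcharf0 hchar) mulr0 add0r. Qed.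

Lemma Fp_elem (z : F) : z ^+ p = z -> exists k : 'I_p, (k : nat)%:R = z.
Proof.
Proof.
move=> hz; case: (pickP [pred k : 'I_p | (k : nat)%:R == z]) => [k /eqP hk|none].
  by exists k.
exfalso.
have p1 : (1 < p)%N by rewrite prime_gt1 // (pcharf_prime hchar).
pose P : {poly F} := 'X^p - 'X.
have szP : size P = p.+1.
  by rewrite /P size_polyDl ?size_polyXn // size_polyN size_polyX.
have nzP : P != 0 by rewrite -size_poly_eq0 szP.
pose rs := z :: [seq ((val k)%:R : F) | k : 'I_p <- enum 'I_p].
have := max_poly_roots nzP (rs := rs).
rewrite /= size_map size_enum_ord szP ltnn.
move=> H; suff: false by []. apply: H.
  rewrite /= /root /P !hornerE hz subrr eqxx /=.
  apply/allP => w /mapP [k _ ->]; rewrite !hornerE.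
  by have := frob_nat 1 k; rewrite expn1 => ->; rewrite subrr.
rewrite /= map_inj_uniq ?enum_uniq // ?andbT.
  apply/mapP => [[k _ hk]]; have := none k; by rewrite /= hk eqxx.
by move=> k k' /natr_inj_lt E; apply: val_inj; apply: E.
Qed.

Lemma sum_shift (R : zmodType) (m : nat) (g : nat -> R) :
  g m = g 0%N -> \sum_(i < m) g i.+1 = \sum_(i < m) g i.
Proof.
move=> hg; have E1 := big_ord_recl m (fun i : 'I_m.+1 => g i) (op := +%R) (idx := 0).
have E2 := big_ord_recr m (fun i : 'I_m.+1 => g i) (op := +%R) (idx := 0).
move: E2; rewrite E1 /= hg [RHS]addrC => /addrI E.
exact: E.
Qed.

Context {n : nat} {zeta : algC}.
Hypothesis hcard : #|F| = (p ^ n)%N.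
Hypothesis hn : (0 < n)%N.
Hypothesis hzeta : p.-primitive_root zeta.

Lemma xpn (x : F) : x ^+ (p ^ n) = x.
Proof. by rewrite -hcard expf_card. Qed.

Local Notation tr := (@absTr F p n).
Local Notation chi := (@addChar F p n zeta).

Lemma tr_frob (x : F) : tr (x ^+ p) = tr x.
Proof.
rewrite /absTr; under eq_bigr do rewrite -exprM -expnS.
by apply: (@sum_shift F n (fun i => x ^+ (p ^ i))); rewrite xpn expn0 expr1.
Qed.

Lemma tr_frobk k (x : F) : tr (x ^+ (p ^ k)) = tr x.
Proof.
elim: k => [|k IH]; first by rewrite expn0 expr1.
by rewrite expnSr exprM tr_frob IH.
Qed.

Lemma trD (x y : F) : tr (x + y) = tr x + tr y.
Proof. by rewrite /absTr -big_split; apply: eq_bigr => i _; rewrite frobD. Qed.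

Lemma tr0 : tr 0 = 0.
Proof. by rewrite /absTr big1 // => i _; rewrite frob0. Qed.

Lemma tr_p (x : F) : (tr x) ^+ p = tr x.
Proof.
have := frob_sum 1 'I_n (index_enum 'I_n) xpredT (fun i : 'I_n => x ^+ (p ^ i)).
rewrite expn1 => E; rewrite /absTr E -[RHS](tr_frob x) /absTr.
by apply: eq_bigr => i _; rewrite -!exprM mulnC.
Qed.

Lemma zeta_p : zeta ^+ p = 1.
Proof. exact: prim_expr_order hzeta. Qed.

Lemma chi_spec (x : F) (k : nat) : (k%:R : F) = tr x -> chi x = zeta ^+ k.
Proof.
move=> hk; rewrite /addChar; case: pickP => [k0 /eqP hk0 | none] /=.
  rewrite -(prim_expr_mod hzeta k); congr (_ ^+ _).
  apply: natr_inj_lt => //; first by rewrite ltn_pmod // p_gt0.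
  by rewrite natr_mod hk0 hk.
have := none (Ordinal (ltn_pmod k p_gt0)); by rewrite /= natr_mod hk eqxx.
Qed.

Arguments chi_spec {x k}.

Lemma tr_Fp (x : F) : exists k : nat, (k%:R : F) = tr x.
Proof. by have [k hk] := Fp_elem _ (tr_p x); exists k. Qed.

Lemma chiD (x y : F) : chi (x + y) = chi x * chi y.
Proof.
have [k1 h1] := tr_Fp x; have [k2 h2] := tr_Fp y.
rewrite (chi_spec h1) (chi_spec h2) (@chi_spec _ (k1 + k2)) ?exprD //.
by rewrite natrD h1 h2 trD.
Qed.

Lemma chi0 : chi 0 = 1.
Proof. by rewrite (@chi_spec 0 0) ?expr0 // tr0. Qed.

Lemma chiN (x : F) : chi (- x) * chi x = 1.
Proof. by rewrite -chiD addNr chi0. Qed.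

Lemma chi_neq0 (x : F) : chi x != 0.
Proof.
apply/eqP => h; have := chiN x; rewrite h mulr0 => /eqP; by rewrite eq_sym oner_eq0.
Qed.

Lemma chi_frobk k (x : F) : chi (x ^+ (p ^ k)) = chi x.
Proof. by have [k1 h1] := tr_Fp x; rewrite (chi_spec h1) (chi_spec (etrans h1 (esym (tr_frobk k x)))). Qed.

Lemma chi_ne1 (x : F) : tr x != 0 -> chi x != 1.
Proof.
have [k hk] := Fp_elem _ (tr_p x); rewrite (chi_spec hk) -hk => nz.
rewrite -(prim_order_dvd hzeta); apply/negP => /(dvdn_leq _) h.
have k0 : (0 < k)%N by case: (k : nat) nz => //=; rewrite eqxx.
by move: (h k0); rewrite leqNgt ltn_ord.
Qed.

Lemma chi_tr0 (x : F) : tr x = 0 -> chi x = 1.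
Proof. by move=> h; rewrite (@chi_spec x 0) ?expr0 // h. Qed.

Lemma orth (V : pred F) (f : F -> F) (c0 : F) :
  (forall c, V (c + c0) = V c) -> (forall c, f (c + c0) = f c + f c0) ->
  tr (f c0) != 0 -> \sum_(c | V c) chi (f c) = 0.
Proof.
move=> hV hf nz.
have E : \sum_(c | V c) chi (f c) = chi (f c0) * \sum_(c | V c) chi (f c).
  rewrite {1}(reindex_inj (addIr c0)) /= mulr_sumr.
  by apply: eq_big => c; rewrite ?hV // => _; rewrite hf chiD mulrC.
have : (1 - chi (f c0)) * \sum_(c | V c) chi (f c) = 0 by rewrite mulrBl mul1r -E subrr.
move/eqP; rewrite mulf_eq0 subr_eq0 eq_sym (negbTE (chi_ne1 _ nz)) /=.
by move/eqP.
Qed.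


Lemma p_gt1 : (1 < p)%N.
Proof. by rewrite prime_gt1 // (pcharf_prime hchar). Qed.

Lemma card_gt1 : (1 < #|F|)%N.
Proof.
rewrite hcard; case: n hn => // n' _; rewrite expnS.
by apply: (leq_trans p_gt1); rewrite leq_pmulr // expn_gt0 p_gt0.
Qed.

Lemma unit_pow (x : F) : x != 0 -> x ^+ #|F|.-1 = 1.
Proof.
move=> nz; have := expf_card x.
rewrite -(prednK (ltnW card_gt1)) exprS => h; apply: (mulfI nz).
by rewrite h mulr1.
Qed.

Lemma card_roots_le (P : {poly F}) : P != 0 -> (#|[pred x | root P x]| < size P)%N.
Proof.
move=> nz; rewrite cardE; apply: max_poly_roots => //.
  by apply/allP => x; rewrite mem_enum.
exact: enum_uniq.
Qed.

Lemma card_fib (e d : nat) : (0 < e)%N -> (e * d)%N = #|F|.-1 ->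
  #|[pred z : F | z ^+ e == 1]| = e /\ (forall z : F, z ^+ e == 1 -> #|[pred x : F | x ^+ d == z]| = d).
Proof.
move=> e0 ed.
have d0 : (0 < d)%N.
  case: (posnP d) => // d0; move: ed; rewrite d0 muln0 => h.
  by have := card_gt1; rewrite -(prednK (ltnW card_gt1)) -h.
pose U := [pred z : F | z ^+ e == 1].
have hU : (#|U| <= e)%N.
  rewrite cardE; apply: max_unity_roots => //; last exact: enum_uniq.
  by apply/allP => x; rewrite mem_enum unity_rootE.
have hfib z : (#|[pred x : F | x ^+ d == z]| <= d)%N.
  have := @card_roots_le ('X^d - z%:P).
  rewrite size_XnsubC // -size_poly_eq0 size_XnsubC // ltnS => /(_ isT) h.
  apply: leq_trans h; apply: subset_leq_card; apply/subsetP => x.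
  by rewrite !inE /root !hornerE subr_eq0.
have Uz z : U z -> z != 0.
  rewrite /U /= => /eqP h; apply/eqP => z0; move: h; rewrite z0 expr0n.
  by rewrite (gtn_eqF e0) => /eqP; rewrite eq_sym oner_eq0.
have hsum : #|[pred x : F | x != 0]| = (\sum_(z | U z) #|[pred x : F | x ^+ d == z]|)%N.
  rewrite -sum1_card (partition_big (fun x => x ^+ d) U).
    apply: eq_bigr => z Uzz; rewrite -sum1_card; apply: eq_bigl => x.
    apply/idP/idP => [/andP[]//|xz]; apply/andP; split => //; apply/eqP => x0.
    by move: (Uz z Uzz); move/eqP: xz => <-; rewrite x0 expr0n (gtn_eqF d0) eqxx.
  move=> x /= nz; rewrite /U /= -exprM mulnC ed unit_pow //.
have hN : #|[pred x : F | x != 0]| = #|F|.-1 by rewrite -(cardC1 (0 : F)); apply: eq_card.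
have le1 : (#|F|.-1 <= #|U| * d)%N.
  rewrite -hN hsum -sum_nat_const; exact: leq_sum.
have eU : #|U| = e.
  apply/eqP; rewrite -(eqn_pmul2r d0) eqn_leq (leq_mul hU (leqnn d)) /= ed //.
split => // z Uzz; apply/eqP; rewrite eqn_leq hfib /=.
have : (\sum_(z | U z) (d - #|[pred x : F | x ^+ d == z]|) == 0)%N.
  rewrite sumnB; last by move=> i _; exact: hfib.
  rewrite -hsum hN sum_nat_const eU ed subnn //.
rewrite sum_nat_eq0 => /forallP /(_ z) /implyP /(_ Uzz).
by rewrite subn_eq0.
Qed.

Lemma tr_nonzero : exists x : F, tr x != 0.
Proof.
case: (pickP [pred x : F | tr x != 0]) => [x hx|none]; first by exists x.
exfalso.
pose Q : {poly F} := \sum_(i < n) 'X^(p ^ i).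
have hQ x : Q.[x] = tr x by rewrite /Q horner_sum; apply: eq_bigr => i _; rewrite hornerXn.
have m0 : (0 < p ^ n.-1)%N by rewrite expn_gt0 p_gt0.
have hn1 : (n.-1 < n)%N by rewrite ltn_predL.
have nzQ : Q != 0.
  apply/eqP => /(congr1 (fun P : {poly F} => P`_(p ^ n.-1))).
  rewrite coef0 /Q coef_sum (bigD1 (Ordinal hn1)) //= coefXn eqxx big1.
    by rewrite addr0 => /eqP; rewrite oner_eq0.
  move=> i /= ne; rewrite coefXn eqn_exp2l ?p_gt1 //.
  by move: ne; rewrite -val_eqE /= eq_sym => /negbTE ->.
have szQ : (size Q <= (p ^ n.-1).+1)%N.
  apply: leq_trans (size_sum _ _ _) _; apply/bigmax_leqP => i _.
  by rewrite size_polyXn ltnS leq_exp2l ?p_gt1 // -ltnS prednK.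
have := card_roots_le _ nzQ; rewrite (@eq_card _ _ predT).
  rewrite cardT -cardE hcard => h.
  have := leq_trans h szQ; rewrite ltnS -(prednK hn) expnS /= leqNgt.
  by rewrite (ltn_Pmull p_gt1 m0).
move=> x; rewrite !inE /root hQ; have := none x; rewrite /= => /negbFE ->; by [].
Qed.

End Gen.

Lemma big_split_mul (R : zmodType) (k m : nat) (g : nat -> R) :
  \sum_(i < k * m) g i = \sum_(l < k) \sum_(j < m) g (l * m + j)%N.
Proof.
elim: k => [|k IH]; first by rewrite mul0n !big_ord0.
rewrite big_ord_recr /= -IH.
have -> : (k.+1 * m = k * m + m)%N by rewrite mulSnr.
by rewrite big_split_ord.
Qed.

Lemma dvd_pred_pow (m k : nat) : (0 < m)%N -> (m.-1 %| (m ^ k).-1)%N.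
Proof.
move=> m0; have mk : (0 < m ^ k)%N by rewrite expn_gt0 m0.
have hm : (m %% (m - 1) = 1 %% (m - 1))%N.
  by rewrite -{1}(prednK m0) -addn1 subn1 modnDl.
by rewrite -!subn1 -eqn_mod_dvd // -modnXm hm modnXm exp1n.
Qed.

Section Main.
Variables (p t s : nat) (F : finFieldType) (zeta : algC).
Hypotheses (hp : prime p) (hodd : odd p) (ht : (0 < t)%N) (hs : (0 < s)%N)
  (hchar : p \in [pchar F]) (hcard : #|F| = ((p ^ (t * s)) ^ 2)%N)
  (hzeta : p.-primitive_root zeta).

Local Notation n := (2 * (t * s))%N.
Local Notation r := (p ^ t)%N.
Local Notation q := (r ^ s)%N.
Local Notation tr := (@absTr F p n).
Local Notation chi := (@addChar F p n zeta).
Local Notation trq := (@relTr F r s).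

Lemma hq : q = (p ^ (t * s))%N.
Proof. by rewrite expnM. Qed.

Lemma hcard' : #|F| = (p ^ n)%N.
Proof. by rewrite hcard -expnM mulnC. Qed.

Lemma hn : (0 < n)%N.
Proof. by rewrite !muln_gt0 ht hs. Qed.

Lemma p0 : (0 < p)%N. Proof. exact: prime_gt0. Qed.
Lemma p1 : (1 < p)%N. Proof. exact: prime_gt1. Qed.
Lemma r1 : (1 < r)%N.
Proof. by case: t ht => // t' _; rewrite expnS; apply: leq_trans p1 _; rewrite leq_pmulr // expn_gt0 p0. Qed.
Lemma q1 : (1 < q)%N.
Proof. by case: s hs => // s' _; rewrite expnS; apply: leq_trans r1 _; rewrite leq_pmulr // expn_gt0 ltnW // r1. Qed.

Lemma cardq : #|F| = (q * q)%N.
Proof. by rewrite hcard hq mulnn. Qed.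

Lemma xqq (x : F) : x ^+ (q * q) = x.
Proof. by rewrite -cardq expf_card. Qed.

Lemma two_nz : (2%:R : F) != 0.
Proof.
rewrite -(dvdn_pcharf hchar); apply/negP => /(dvdn_leq (isT : (0 < 2)%N)) h.
have : p = 2%N by apply/eqP; rewrite eqn_leq h /= p1.
by move=> e; move: hodd; rewrite e.
Qed.

Lemma cpow_r (c : F) l : c ^+ r = c -> c ^+ (r ^ l) = c.
Proof.
move=> hc; elim: l => [|l IH]; first by rewrite expn0 expr1.
by rewrite expnSr exprM IH hc.
Qed.

Definition trR (v : F) := \sum_(l < 2 * s) v ^+ (r ^ l).

Lemma trD_R (v : F) : tr v = \sum_(j < t) (trR v) ^+ (p ^ j).
Proof.
rewrite /absTr.
have -> : n = (2 * s * t)%N by nia.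
rewrite (@big_split_mul F (2 * s) t (fun i => v ^+ (p ^ i))) exchange_big /=.
apply: eq_bigr => j _; rewrite /trR (frob_sum hchar); apply: eq_bigr => l _.
by rewrite -exprM expnD [(l * t)%N]mulnC expnM.
Qed.

Lemma trR_lin (c y : F) : c ^+ r = c -> trR (c * y) = c * trR y.
Proof.
move=> hc; rewrite /trR mulr_sumr; apply: eq_bigr => l _.
by rewrite exprMn (cpow_r _ _ hc).
Qed.

Lemma trR_q (y : F) : y ^+ q = y -> trR y = trq y *+ 2.
Proof.
move=> hy; rewrite /trR /relTr mul2n -addnn big_split_ord /= mulr2n.
congr (_ + _); apply: eq_bigr => l _.
by rewrite expnD exprM hy.
Qed.

Lemma trR_r (u : F) : (trR u) ^+ r = trR u.
Proof.
rewrite /trR (frob_sum hchar).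
have := @sum_shift F (2 * s) (fun l => u ^+ (r ^ l)).
rewrite -expnM. have -> : (t * (2 * s) = n)%N by nia. rewrite -hcard' expf_card expn0 expr1 => /(_ erefl) <-.
by apply: eq_bigr => l _; rewrite -exprM expnS mulnC.
Qed.

Lemma trq_r (y : F) : y ^+ q = y -> (trq y) ^+ r = trq y.
Proof.
move=> hy; rewrite /relTr (frob_sum hchar).
have := @sum_shift F s (fun l => y ^+ (r ^ l)).
rewrite hy expn0 expr1 => /(_ erefl) <-.
by apply: eq_bigr => l _; rewrite -exprM expnS mulnC.
Qed.


Let hc' := hcard'.
Let hn' := hn.

Lemma chiD' (x y : F) : chi (x + y) = chi x * chi y. Proof. by apply: chiD. Qed.
Lemma chi0' : chi 0 = 1. Proof. by apply: chi0. Qed.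
Lemma chiN' (x : F) : chi (- x) * chi x = 1. Proof. by apply: chiN. Qed.
Lemma chi_frobk' k (x : F) : chi (x ^+ (p ^ k)) = chi x. Proof. by apply: chi_frobk. Qed.
Lemma chi_tr0' (x : F) : tr x = 0 -> chi x = 1. Proof. by apply: chi_tr0. Qed.
Lemma tr_frobk' k (x : F) : tr (x ^+ (p ^ k)) = tr x. Proof. by apply: tr_frobk. Qed.
Lemma trD' (x y : F) : tr (x + y) = tr x + tr y. Proof. by apply: trD. Qed.
Lemma tr_nonzero' : exists x : F, tr x != 0. Proof. by apply: tr_nonzero. Qed.
Lemma orth' (V : pred F) (f : F -> F) (c0 : F) :
  (forall c, V (c + c0) = V c) -> (forall c, f (c + c0) = f c + f c0) ->
  tr (f c0) != 0 -> \sum_(c | V c) chi (f c) = 0.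
Proof. by move=> *; apply: orth. Qed.

Lemma card_sub (m : nat) : (1 < m)%N -> (m.-1 %| #|F|.-1)%N ->
  #|[pred c : F | c ^+ m == c]| = m.
Proof.
move=> m1 dv.
have e0 : (0 < m.-1)%N by rewrite -ltnS prednK // ltnW.
have ed : (m.-1 * (#|F|.-1 %/ m.-1) = #|F|.-1)%N by rewrite mulnC divnK.
have [cU _] := @card_fib F p hchar n hc' hn' m.-1 (#|F|.-1 %/ m.-1) e0 ed.
rewrite (cardD1 0) inE expr0n (gtn_eqF (ltnW m1)) eqxx /= -{2}(prednK (ltnW m1)) -cU add1n.
congr (_.+1); apply: eq_card => c; rewrite !inE.
have [->|nz] := eqVneq c 0; first by rewrite /= expr0n (gtn_eqF e0) eq_sym oner_eq0.
rewrite /= -{1}(prednK (ltnW m1)) exprSr.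
by apply/eqP/eqP => [h|->]; [apply: (mulIf nz); rewrite h mul1r | rewrite mul1r].
Qed.

Lemma cardFr : #|[pred c : F | c ^+ r == c]| = r.
Proof.
apply: card_sub; first exact: r1.
rewrite hc'. have -> : (n = t * (2 * s))%N by nia. by rewrite expnM dvd_pred_pow // ltnW // r1.
Qed.

Lemma cardFq : #|[pred c : F | c ^+ q == c]| = q.
Proof.
apply: card_sub; first exact: q1.
by rewrite cardq mulnn dvd_pred_pow // ltnW // q1.
Qed.


Lemma ind (y : F) : y ^+ q = y ->
  \sum_(c | c ^+ r == c) chi (c * y) = if trq y == 0 then r%:R else 0.
Proof.
move=> hy.
have key c : c ^+ r = c -> tr (c * y) = \sum_(j < t) (c * trq y *+ 2) ^+ (p ^ j).
  by move=> hc; rewrite trD_R trR_lin // trR_q // mulrnAr.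
case: ifP => [/eqP z0 | /negbT nz].
  transitivity (\sum_(c in [pred c : F | c ^+ r == c]) (1 : algC)).
    apply: eq_bigr => c /eqP hc; apply: chi_tr0'; rewrite key // z0 mulr0 mul0rn.
    by apply: big1 => j _; apply: (frob0 hchar).
  by rewrite sumr_const cardFr.
have [x hx] := tr_nonzero'.
set z := trq y in nz *.
pose w := z *+ 2.
have wnz : w != 0 by rewrite /w -mulr_natr mulf_neq0 // two_nz.
have wr : w ^+ r = w by rewrite /w !mulr2n (frobD hchar) trq_r.
pose c0 := trR (x / w).
apply: (@orth' [pred c : F | c ^+ r == c] (fun c => c * y) c0).
- move=> c; rewrite !inE (frobD hchar) trR_r.
  by rewrite (inj_eq (addIr c0)).
- by move=> c; rewrite mulrDl.
rewrite key ?trR_r //.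
have -> : c0 * trq y *+ 2 = trR x.
  by rewrite -mulrnAr -/z -/w mulrC -trR_lin // mulrC divfK.
by rewrite -trD_R.
Qed.


Lemma pred_sub (m : nat) (c : F) : (1 < m)%N ->
  ((c ^+ m == c) && (c != 0)) = (c ^+ m.-1 == 1).
Proof.
move=> m1; have e0 : (0 < m.-1)%N by rewrite -ltnS prednK // ltnW.
have [->|nz] := eqVneq c 0; first by rewrite andbF expr0n (gtn_eqF e0) eq_sym oner_eq0.
rewrite andbT -{1}(prednK (ltnW m1)) exprSr.
by apply/eqP/eqP => [h|->]; [apply: (mulIf nz); rewrite h mul1r | rewrite mul1r].
Qed.

Lemma frobq (x y : F) : (x + y) ^+ q = x ^+ q + y ^+ q.
Proof. by rewrite hq (frobD hchar). Qed.

Lemma gaussN (c : F) : c != 0 -> c ^+ q = c ->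
  \sum_x chi (c * x ^+ q.+1) = - (q%:R).
Proof.
move=> cnz hc.
have e0 : (0 < q.-1)%N by have := q1; lia.
have ed : (q.-1 * q.+1 = #|F|.-1)%N by rewrite cardq; have := q1; nia.
have [_ hfib] := @card_fib F p hchar n hc' hn' q.-1 q.+1 e0 ed.
pose fib y := #|[pred x : F | x ^+ q.+1 == y]|.
have S1 : \sum_x chi (c * x ^+ q.+1) = \sum_y chi (c * y) *+ fib y.
  rewrite (partition_big (fun x => x ^+ q.+1) xpredT) //.
  apply: eq_bigr => y _.
  transitivity (\sum_(x in [pred x : F | x ^+ q.+1 == y]) chi (c * y)).
    by apply: eq_big => // x /andP[_ /eqP ->].
  by rewrite sumr_const.
pose U := [pred y : F | y ^+ q.-1 == 1].
have S2 : \sum_y chi (c * y) *+ fib y = 1 + (\sum_(y | U y) chi (c * y)) *+ q.+1.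
  rewrite (bigD1 0) //= mulr0 chi0'.
  have -> : fib 0 = 1%N.
    rewrite /fib -(card1 (0 : F)); apply: eq_card => x; rewrite !inE expf_eq0 /=.
    by [].
  congr (_ + _); rewrite -sumrMnl big_mkcond [RHS]big_mkcond /=.
  apply: eq_bigr => y _.
  have [->|ynz] := eqVneq y 0; first by rewrite /U /= expr0n (gtn_eqF e0) eq_sym oner_eq0.
  rewrite /=; case: ifP => Uy; first by rewrite /fib hfib.
  suff -> : fib y = 0%N by rewrite mulr0n.
  apply: eq_card0 => x; rewrite !inE; apply/negP => /eqP hx.
  have xnz : x != 0 by apply: contraNneq ynz => x0; rewrite -hx x0 expr0n.
  by move: Uy; rewrite /U /= -hx -exprM mulnC ed (unit_pow hchar hc' hn') // eqxx.

have S3 : \sum_(y | U y) chi (c * y) = -1.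
  have [x1 hx1] := tr_nonzero'.
  pose c0 := (x1 + x1 ^+ q) / c.
  have c0q : c0 ^+ q = c0.
    by rewrite /c0 exprMn frobq exprVn -exprM xqq hc addrC.
  have O : \sum_(y | y ^+ q == y) chi (c * y) = 0.
    apply: (@orth' _ (fun y => c * y) c0).
    - by move=> y1; rewrite frobq c0q (inj_eq (addIr c0)).
    - by move=> y1; rewrite mulrDr.
    by rewrite /c0 mulrC divfK // trD' hq tr_frobk' -mulr2n -mulr_natr mulf_neq0 // two_nz.
  rewrite (bigD1 0) /= ?expr0n ?(gtn_eqF (ltnW q1)) // mulr0 chi0' in O.
  have E : \sum_(y | (y ^+ q == y) && (y != 0)) chi (c * y) = \sum_(y | U y) chi (c * y).
    by apply: eq_bigl => y; rewrite pred_sub // q1.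
  by apply/eqP; rewrite -addr_eq0 addrC -E; apply/eqP.
by rewrite S1 S2 S3 mulNrn mulrS opprD addrA subrr add0r.
Qed.


Lemma frob2 : (2%:R : F) ^+ q = 2%:R.
Proof. by rewrite hq (frob_nat hchar). Qed.

Lemma compsq (a c : F) : c != 0 -> c ^+ q = c ->
  \sum_x chi (a * x) * chi (c * x ^+ q.+1) =
  chi (- (a ^+ q.+1 / (4%:R * c))) * \sum_x chi (c * x ^+ q.+1).
Proof.
move=> cnz hc.
pose b := a ^+ q / (2%:R * c).
have bq : b ^+ q = a / (2%:R * c).
  by rewrite /b exprMn exprVn exprMn -exprM xqq hc frob2.
have h2 := two_nz.
have iden x : c * (x + b) ^+ q.+1 =
    c * x ^+ q.+1 + (a * x / 2%:R) + (a * x / 2%:R) ^+ q + a ^+ q.+1 / (4%:R * c).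
  rewrite !exprSr frobq bq !exprMn exprVn frob2 /b.
  have h4 : (4%:R : F) != 0 by rewrite -[4%N]/(2 * 2)%N natrM mulf_neq0.
  by field; rewrite cnz h4 h2.
pose w := a ^+ q.+1 / (4%:R * c).
have hchi x : chi (a * x) * chi (c * x ^+ q.+1) = chi (c * (x + b) ^+ q.+1) * chi (- w).
  pose u := a * x / 2%:R.
  have cu : chi (u ^+ q) = chi u by rewrite hq chi_frobk'.
  have au : a * x = u + u by rewrite /u; field.
  rewrite iden -/u -/w !chiD' cu au chiD'.
  have hw := chiN' w.
  transitivity (chi u * chi u * chi (c * x ^+ q.+1) * (chi (- w) * chi w)).
    by rewrite hw mulr1.
  by ring.
under eq_bigr do rewrite hchi.
rewrite -mulr_suml mulrC; congr (_ * _).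
by rewrite [RHS](reindex_inj (addIr b)).
Qed.


Lemma four_nz : (4%:R : F) != 0.
Proof. by rewrite -[4%N]/(2 * 2)%N natrM mulf_neq0 // two_nz. Qed.

Lemma Nq (x : F) : (x ^+ q.+1) ^+ q = x ^+ q.+1.
Proof. by rewrite exprSr exprMn -exprM xqq mulrC. Qed.

Lemma trq_lin (l y : F) : l ^+ r = l -> trq (l * y) = l * trq y.
Proof.
move=> hl; rewrite /relTr mulr_sumr; apply: eq_bigr => i _.
by rewrite exprMn cpow_r.
Qed.

Lemma mainR (a : F) : a != 0 ->
  r%:R * (\sum_(x | trq (x ^+ q.+1) == 0) chi (a * x)) =
  - q%:R * ((if trq (a ^+ q.+1) == 0 then r%:R else 0) - 1).
Proof.
move=> anz.
have Fr0 : (0 : F) ^+ r == 0 by rewrite expr0n (gtn_eqF (ltnW r1)).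
have S1 : r%:R * (\sum_(x | trq (x ^+ q.+1) == 0) chi (a * x)) =
    \sum_(c | c ^+ r == c) \sum_x chi (a * x) * chi (c * x ^+ q.+1).
  rewrite exchange_big /= mulr_sumr big_mkcond; apply: eq_bigr => x _.
  rewrite -mulr_sumr ind ?Nq //.
  by case: ifP => _; rewrite ?mulr0 // mulrC.
have S0 : \sum_x chi (a * x) * chi (0 * x ^+ q.+1) = 0.
  under eq_bigr do rewrite mul0r chi0' mulr1.
  have [x0 hx0] := tr_nonzero'.
  apply: (@orth' xpredT (fun x => a * x) (x0 / a)) => //.
    by move=> x; rewrite mulrDr.
  by rewrite mulrC divfK.
rewrite S1 (bigD1 0) //= S0 add0r.
pose w := - (a ^+ q.+1 / 4%:R).
have S2 : \sum_(c | (c ^+ r == c) && (c != 0)) \sum_x chi (a * x) * chi (c * x ^+ q.+1) =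
   - q%:R * \sum_(c | (c ^+ r == c) && (c != 0)) chi (c * w).
  rewrite mulr_sumr (reindex_inj invr_inj) /=.
  apply: eq_big => c.
    by rewrite exprVn (inj_eq invr_inj) invr_eq0.
  move=> /andP[/eqP hc cnz'].
  have cnz : c != 0 by rewrite -invr_eq0.
  have hcq : c^-1 ^+ q = c^-1 by rewrite (cpow_r _ _ hc).
  rewrite compsq // gaussN // mulrC; congr (_ * _); congr (chi _).
  by rewrite /w; field; rewrite cnz four_nz.
rewrite S2; congr (_ * _).
have hw : w ^+ q = w.
  by rewrite /w hq (frobN hodd) exprMn frobV (frob_nat hchar) -hq Nq.
have := ind _ hw; rewrite (bigD1 0) //= mul0r chi0' => E.
have hw2 : trq w = - 4%:R^-1 * trq (a ^+ q.+1).
  rewrite /w -mulNr mulrC -trq_lin //.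
    by rewrite mulrN mulNr.
  by rewrite (@frobN F p hodd t) exprVn (frob_nat hchar t 4).
rewrite hw2 mulf_eq0 oppr_eq0 invr_eq0 (negbTE four_nz) /= in E.
by rewrite -E addrC addrK.
Qed.

End Main.

Theorem mainTheorem10
  (p t s : nat) (F : finFieldType) (zeta : algC) (a : F)
  (hp : prime p) (hodd : odd p) (ht : (0 < t)%N) (hs : (0 < s)%N)
  (hchar : p \in [pchar F])
  (hcard : #|F| = ((p ^ (t * s)) ^ 2)%N)
  (hzeta : p.-primitive_root zeta)
  (ha : a != 0) :
  let r := (p ^ t)%N in
  let q := (r ^ s)%N in
  let T := q.+1 in
  let P := \sum_(x : F | relTr r s (x ^+ T) == 0) addChar p (2 * (t * s)) zeta (a * x) in
  (relTr r s (a ^+ T) == 0 -> P = - ((q%:R / r%:R) * (r%:R - 1))) /\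
  (relTr r s (a ^+ T) != 0 -> P = q%:R / r%:R).
Proof.
move=> r q T P.
have E : (r%:R : algC) * P = - q%:R * ((if relTr r s (a ^+ T) == 0 then r%:R else 0) - 1).
  exact: (mainR _ _ _ _ _ hp hodd ht hs hchar hcard hzeta a ha).
have rnz : (r%:R : algC) != 0 by rewrite pnatr_eq0 -lt0n expn_gt0 prime_gt0.
split => h.
  rewrite h in E; apply: (mulfI rnz); rewrite E.
  by field.
rewrite (negbTE h) in E; apply: (mulfI rnz); rewrite E.
by field.
Qed.
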